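(* For a word $w=w_1\cdots w_n$ over $\{1,2,3,4\}$ let $s(w)=|\{i : 1\le i\le n-2,\ w_{i+2}-w_i=2\}|$. Then $$\sum_{w\in\{1,2,3,4\}^*} q^{|w|}z^{s(w)}=\frac{1}{1-4q-8q^3(z-1)-4q^4(z-1)^2}.$$
   Context: The sum ranges over all finite words over $\{1,2,3,4\}$, including the empty word; $|w|$ denotes length. $s(w)$ counts occurrences of the place-difference-value pattern $(12,(\mathbb{P},\{2\},\mathbb{P}),\{(1,2,\{2\})\},(\mathbb{P},\mathbb{P}))$. *)

(* Defs.v *)
From mathcomp Require Import all_boot all_order all_algebra.
Set Implicit Arguments. Unset Strict Implicit. Unset Printing Implicit Defensive.
Import GRing.Theory.
Local Open Scope ring_scope.

(* A word over {1,2,3,4} of length n: an n-tuple of 'I_4, letter a read as a+1. *)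
Definition letters (w : seq 'I_4) : seq nat := map (fun a : 'I_4 => (val a).+1) w.

(* s(w) = #{ i : 1 <= i <= n-2, w_{i+2} - w_i = 2 } (0-based index here). *)
Definition s_stat (w : seq 'I_4) : nat :=
  count (fun i => nth 0%N (letters w) i.+2 == (nth 0%N (letters w) i + 2)%N)
        (iota 0 (size w - 2)).

(* Coefficient of q^n in the generating function: a polynomial in z. *)
Definition Fcoef (n : nat) : {poly int} :=
  \sum_(w : n.-tuple 'I_4) 'X ^+ (s_stat w).

(* Denominator 1 - 4q - 8q^3(z-1) - 4q^4(z-1)^2, as a polynomial in q
   with coefficients in Z[z]. *)
Definition Den : {poly {poly int}} :=
  1 - (4%:R : {poly int})%:P * 'X
    - ((8%:R : {poly int}) * ('X - 1))%:P * 'X ^+ 3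
    - ((4%:R : {poly int}) * ('X - 1) ^+ 2)%:P * 'X ^+ 4.

(* Main.v *)
Require Import Defs.
From mathcomp Require Import all_boot all_order all_algebra.
From mathcomp Require Import ring.
Local Open Scope ring_scope.
Import GRing.Theory.

Definition cls (a : 'I_4) : bool := (val a < 2)%N.
Definition ee (x : bool) : {poly int} := if x then 1 + 'X else 2%:R.
Fixpoint kk (m : nat) (x : bool) : {poly int} :=
  if m is m'.+1 then 2%:R * kk m' true + ee x * kk m' false else 1.

Lemma sum4 (f : 'I_4 -> {poly int}) :
  \sum_(c : 'I_4) f c = f (@Ordinal 4 0 isT) + f (@Ordinal 4 1 isT) + f (@Ordinal 4 2 isT) + f (@Ordinal 4 3 isT).
Proof.
rewrite !big_ord_recr big_ord0 /= add0r.
by congr (_ + _ + _ + _); congr f; exact: val_inj.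
Qed.

Lemma step (a : 'I_4) (g : bool -> {poly int}) :
  \sum_(c : 'I_4) 'X ^+ (val c == (val a + 2)%N) * g (cls c) =
  2%:R * g true + ee (cls a) * g false.
Proof.
rewrite sum4 /cls /ee /=.
case: a => [[|[|[|[|?]]]] Ha] //=; rewrite ?expr0 ?expr1 ?mul1r; ring.
Qed.
Lemma s_cons a b c (w : seq 'I_4) :
  s_stat [:: a, b, c & w] = ((val c == (val a + 2)%N) + s_stat [:: b, c & w])%N.
Proof.
rewrite /s_stat /=.
have -> : iota 1 (size w) = map (addn 1) (iota 0 (size w)) by exact: (iotaDl 1 0 _).
rewrite count_map !subSS subn0 addSn eqSS; congr addn.
Qed.

Lemma sum_tuple_cons (R : nmodType) n (F : seq 'I_4 -> R) :
  \sum_(t : n.+1.-tuple 'I_4) F t = \sum_(a : 'I_4) \sum_(t : n.-tuple 'I_4) F (a :: t).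
Proof.
rewrite pair_big /=.
rewrite (reindex (fun p : 'I_4 * n.-tuple 'I_4 => [tuple of p.1 :: p.2])) /=.
  by apply: eq_bigr.
apply: onW_bij; exists (fun t : n.+1.-tuple 'I_4 => (thead t, [tuple of behead t])).
  by move=> [a t] /=; rewrite theadE; congr pair; apply: val_inj.
by move=> t; rewrite /= -tuple_eta.
Qed.

Lemma s_short (w : seq 'I_4) : (size w <= 2)%N -> s_stat w = 0%N.
Proof. by rewrite /s_stat -subn_eq0 => /eqP ->. Qed.

Lemma Hlem n : forall a b : 'I_4,
  \sum_(t : n.-tuple 'I_4) 'X ^+ (s_stat [:: a, b & t]) =
  kk (uphalf n) (cls a) * kk (n./2) (cls b).
Proof.
elim: n => [|n IH] a b.
  rewrite /= mulr1 (eq_bigr (fun _ => 1)); last first.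
    by move=> t _; rewrite s_short // size_tuple.
  by rewrite sumr_const card_tuple expn0.
rewrite (sum_tuple_cons _ _ (fun t : seq 'I_4 => ('X ^+ s_stat [:: a, b & t] : {poly int}))) /=.
rewrite (eq_bigr (fun c : 'I_4 => 'X ^+ (val c == (val a + 2)%N) *
           (kk (uphalf n) (cls b) * kk (n./2) (cls c)))); last first.
  move=> c _; rewrite -IH mulr_sumr; apply: eq_bigr => t _.
  by rewrite s_cons exprD.
rewrite (eq_bigr (fun c : 'I_4 => kk (uphalf n) (cls b) * ('X ^+ (val c == (val a + 2)%N) *
           kk (n./2) (cls c)))); last first.
  by move=> c _; rewrite mulrCA.
by rewrite -mulr_sumr step /= mulrC.
Qed.

Definition GG (m : nat) : {poly int} :=
  if m is m'.+1 then 2%:R * kk m' true + 2%:R * kk m' false else 1.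

Lemma sumcls (f : bool -> {poly int}) :
  \sum_(a : 'I_4) f (cls a) = 2%:R * f true + 2%:R * f false.
Proof. by rewrite sum4 /cls /= -[(0<2)%N]/true -[(1<2)%N]/true -[(2<2)%N]/false -[(3<2)%N]/false !mulr_natl !mulr2n !addrA. Qed.

Lemma Fform n : Fcoef n = GG (uphalf n) * GG (n./2).
Proof.
case: n => [|[|m]].
- rewrite /Fcoef /= mulr1 (eq_bigr (fun _ => 1)); last first.
    by move=> t _; rewrite s_short // size_tuple.
  by rewrite sumr_const card_tuple expn0.
- rewrite /Fcoef /= mulr1 (eq_bigr (fun _ => 1)); last first.
    by move=> t _; rewrite s_short // size_tuple.
  by rewrite sumr_const card_tuple card_ord expn1 /= !mulr1 -natrD.
rewrite /Fcoef (sum_tuple_cons _ _ (fun t : seq 'I_4 => ('X ^+ s_stat t : {poly int}))).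
rewrite (eq_bigr (fun a : 'I_4 => \sum_(b : 'I_4) kk (uphalf m) (cls a) * kk (m./2) (cls b))); last first.
  move=> a _; rewrite (sum_tuple_cons _ _ (fun t : seq 'I_4 => ('X ^+ s_stat (a :: t) : {poly int}))).
  by apply: eq_bigr => b _; rewrite Hlem.
rewrite (eq_bigr (fun a : 'I_4 => kk (uphalf m) (cls a) * (2%:R * kk (m./2) true + 2%:R * kk (m./2) false))); last first.
  by move=> a _; rewrite -mulr_sumr (sumcls (fun x => kk (m./2) x)).
rewrite -mulr_suml (sumcls (fun x => kk (uphalf m) x)) /=.
by [].
Qed.

Lemma kkF m : kk m false = GG m.
Proof. by case: m. Qed.

Lemma GGrec m : GG m.+2 = 4%:R * GG m.+1 + 2%:R * ('X - 1) * GG m.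
Proof. rewrite -(kkF m) /=; move: (kk m true) (kk m false) => x y; ring. Qed.

Arguments GG : simpl never.

Lemma Den_coef k : Den`_k = (k == 0%N)%:R - 4%:R * (k == 1%N)%:R
   - 8%:R * ('X - 1) * (k == 3%N)%:R - 4%:R * ('X - 1) ^+ 2 * (k == 4%N)%:R.
Proof. by rewrite /Den !coefB coef1 !coefCM coefX !coefXn !mulrA. Qed.

Lemma sum_pick (x : nat -> {poly int}) n j :
  \sum_(k < n.+1) (val k == j)%:R * x (val k) = (j <= n)%:R * x j.
Proof.
elim: n => [|n IH].
  by rewrite big_ord1 /=; case: j => [|j]; rewrite /= ?mul0r.
rewrite big_ord_recr /= IH.
case: (ltngtP j n.+1) => [Hlt|Hgt|->].
- by rewrite ltnS in Hlt; rewrite Hlt mul0r addr0.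
- by rewrite leqNgt (ltnW Hgt) /= !mul0r addr0.
- by rewrite ltnn mul0r add0r.
Qed.

Theorem mainTheorem7 (n : nat) :
  \sum_(k < n.+1) Den`_k * Fcoef (n - k) = (n == 0%N)%:R.
Proof.
set c1 : {poly int} := 4%:R; set c3 : {poly int} := 8%:R * ('X - 1);
set c4 : {poly int} := 4%:R * ('X - 1) ^+ 2.
rewrite (eq_bigr (fun k : 'I_n.+1 =>
   (val k == 0%N)%:R * Fcoef (n - k) - (val k == 1%N)%:R * (c1 * Fcoef (n - k))
   - (val k == 3%N)%:R * (c3 * Fcoef (n - k)) - (val k == 4%N)%:R * (c4 * Fcoef (n - k)))); last first.
  move=> k _; rewrite Den_coef /c1 /c3 /c4.
  move: ((val k == 0%N)%:R) ((val k == 1%N)%:R) ((val k == 3%N)%:R) ((val k == 4%N)%:R) (Fcoef (n - k)) => a b c d f.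
  ring.
rewrite !sumrB.
rewrite (sum_pick (fun k => Fcoef (n - k))).
rewrite (sum_pick (fun k => c1 * Fcoef (n - k))).
rewrite (sum_pick (fun k => c3 * Fcoef (n - k))).
rewrite (sum_pick (fun k => c4 * Fcoef (n - k))).
rewrite /c1 /c3 /c4 {c1 c3 c4} !Fform subn0.
case: n => [|[|[|[|m]]]]; rewrite ?ltnS ?leq0n ?ltn0.
1-4: by rewrite /= ?GGrec /GG /= ?mul0r ?mul1r ?subr0; ring.
rewrite !subSS !subn0 /=.
rewrite -[m]odd_double_half; case: (odd m); move: (m./2) => j; rewrite /= ?add1n ?add0n /=.
  rewrite ?uphalf_double ?doubleK !GGrec !mul1r.
  by move: (GG j.+1) (GG j) => x y; ring.
rewrite ?uphalf_double ?doubleK !GGrec !mul1r.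
by move: (GG j.+1) (GG j) => x y; ring.
Qed.
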